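(* For $\alpha=\pi/4$, no deterministic online algorithm can achieve competitive ratio better than $\frac{1+\sqrt2}{2}$.
   Context: Online drone coverage on a line. A drone has a fixed half angle-of-view $\alpha$. A drone at a point $T=(t_x,t_y)$ with $t_y\ge 0$ covers the segment $[t_x-t_y\tan\alpha,\ t_x+t_y\tan\alpha]$ of the $x$-axis. An input is a finite sequence of points $X_0=(0,0),X_1,\dots,X_n$ ($n\ge1$) on the $x$-axis, revealed one at a time. A solution is a sequence of drone positions $P_0=(0,0),P_1,\dots,P_n$ in the closed upper half-plane such that $P_i$ covers $X_0,\dots,X_i$; its cost is $\sum_{i=0}^{n-1}|P_iP_{i+1}|$. A deterministic online algorithm chooses $P_i$ knowing only $X_0,\dots,X_i$ (not $n$). $\mathrm{OPT}$ is the minimum cost of a solution when the whole input is known in advance. The competitive ratio of an algorithm is the supremum over inputs of its cost divided by $\mathrm{OPT}$. *)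

(* Defs.v *)
From Stdlib Require Import Reals List.
Import ListNotations.
Open Scope R_scope.

(* A drone position T = (t_x, t_y) with half angle-of-view alpha covers the
   point x of the x-axis iff t_y >= 0 and x in [t_x - t_y tan alpha, t_x + t_y tan alpha]. *)
Definition covers (alpha : R) (T : R * R) (x : R) : Prop :=
  0 <= snd T /\ fst T - snd T * tan alpha <= x /\ x <= fst T + snd T * tan alpha.

(* An input is X_0 = 0 followed by xs = [X_1; ...; X_n] (n >= 1, i.e. xs <> nil).
   A solution is given by ps = [P_1; ...; P_n]; P_0 = (0,0) is implicit. *)
Definition valid_solution (alpha : R) (xs : list R) (ps : list (R * R)) : Prop :=
  length ps = length xs /\
  forall i : nat, (i < length xs)%nat ->
    covers alpha (nth i ps (0,0)) 0 /\
    forall j : nat, (j <= i)%nat -> covers alpha (nth i ps (0,0)) (nth j xs 0).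

Definition dist (P Q : R * R) : R :=
  sqrt ((fst P - fst Q) ^ 2 + (snd P - snd Q) ^ 2).

Fixpoint path_len (prev : R * R) (ps : list (R * R)) : R :=
  match ps with
  | [] => 0
  | p :: ps' => dist prev p + path_len p ps'
  end.

Definition cost (ps : list (R * R)) : R := path_len (0,0) ps.

Definition is_OPT (alpha : R) (xs : list R) (v : R) : Prop :=
  (forall ps, valid_solution alpha xs ps -> v <= cost ps) /\
  (forall w, (forall ps, valid_solution alpha xs ps -> w <= cost ps) -> w <= v).

(* A deterministic online algorithm: P_i is a function of the revealed prefix
   [X_1; ...; X_i] only (X_0 = 0 is fixed, and n is unknown). *)
Definition online_alg := list R -> R * R.

Definition alg_run (A : online_alg) (xs : list R) : list (R * R) :=
  map (fun i => A (firstn (S i) xs)) (seq 0 (length xs)).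

Definition online_valid (alpha : R) (A : online_alg) : Prop :=
  forall xs, xs <> [] -> valid_solution alpha xs (alg_run A xs).

(* Main.v *)
Require Import Defs.
From Stdlib Require Import Reals List.
Open Scope R_scope.
From Stdlib Require Import Lra Psatz Lia ZArith Classical.
Import ListNotations.
Open Scope R_scope.

(* Proof idea: adversary reveals X_k = (-c)^(k-1) with c = 1 + sqrt 2;
   a weighted (dual) potential argument shows the ratio must exceed r
   at some prefix. *)

Definition xsN (c : R) (n : nat) : list R := map (fun k => (-c)^k) (seq 0 n).

Lemma length_xsN c n : length (xsN c n) = n.
Proof. unfold xsN. rewrite length_map, length_seq. reflexivity. Qed.

Lemma nth_xsN c n j : (j < n)%nat -> nth j (xsN c n) 0 = (-c)^j.
Proof.
  intros Hj. unfold xsN.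
  rewrite (nth_indep _ 0 ((fun k => (-c)^k) 0%nat)) by (rewrite length_map, length_seq; lia).
  rewrite map_nth, seq_nth by lia. reflexivity.
Qed.

Lemma firstn_seq_le : forall n k s, (k <= n)%nat -> firstn k (seq s n) = seq s k.
Proof.
  induction n as [|n IH]; intros k s Hk.
  - assert (k = 0%nat) by lia. subst. reflexivity.
  - destruct k as [|k]; [reflexivity|].
    simpl. f_equal. apply IH. lia.
Qed.

Lemma firstn_xsN c n k : (k <= n)%nat -> firstn k (xsN c n) = xsN c k.
Proof. intros H. unfold xsN. rewrite firstn_map, firstn_seq_le by exact H. reflexivity. Qed.

Lemma CS p q a1 a2 b1 b2 :
  p * (a1 - a2) + q * (b1 - b2) <= sqrt (p^2 + q^2) * sqrt ((a1 - a2)^2 + (b1 - b2)^2).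
Proof.
  rewrite <- sqrt_mult.
  2,3: apply Rplus_le_le_0_compat; apply pow2_ge_0.
  set (L := p * (a1 - a2) + q * (b1 - b2)).
  destruct (Rle_dec L 0) as [H|H].
  - pose proof (sqrt_pos ((p ^ 2 + q ^ 2) * ((a1 - a2) ^ 2 + (b1 - b2) ^ 2))). lra.
  - rewrite <- (sqrt_square L) by lra.
    apply sqrt_le_1_alt.
    assert (E: (p ^ 2 + q ^ 2) * ((a1 - a2) ^ 2 + (b1 - b2) ^ 2) - L * L = (p*(b1-b2)-q*(a1-a2))^2) by (unfold L; ring).
    pose proof (pow2_ge_0 (p*(b1-b2)-q*(a1-a2))). lra.
Qed.

Lemma dist_pos P Q : 0 <= Defs.dist P Q.
Proof. unfold Defs.dist. apply sqrt_pos. Qed.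

Lemma dist_self P : Defs.dist P P = 0.
Proof. unfold Defs.dist. replace ((fst P - fst P) ^ 2 + (snd P - snd P) ^ 2) with 0 by ring. apply sqrt_0. Qed.

Lemma dist_tri P Q S : Defs.dist P S <= Defs.dist P Q + Defs.dist Q S.
Proof.
  unfold Defs.dist.
  set (x1 := fst P - fst Q). set (y1 := snd P - snd Q).
  set (x2 := fst Q - fst S). set (y2 := snd Q - snd S).
  replace (fst P - fst S) with (x1 + x2) by (unfold x1, x2; ring).
  replace (snd P - snd S) with (y1 + y2) by (unfold y1, y2; ring).
  pose proof (sqrt_pos (x1^2 + y1^2)). pose proof (sqrt_pos (x2^2+y2^2)).
  rewrite <- (sqrt_square (sqrt (x1 ^ 2 + y1 ^ 2) + sqrt (x2 ^ 2 + y2 ^ 2))) by lra.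
  apply sqrt_le_1_alt.
  pose proof (sqrt_sqrt (x1^2+y1^2) ltac:(nra)).
  pose proof (sqrt_sqrt (x2^2+y2^2) ltac:(nra)).
  assert (x1 * x2 + y1 * y2 <= sqrt (x1 ^ 2 + y1 ^ 2) * sqrt (x2 ^ 2 + y2 ^ 2)).
  { pose proof (CS x1 y1 x2 0 y2 0). replace (x2 - 0) with x2 in H3 by ring.
    replace (y2 - 0) with y2 in H3 by ring. lra. }
  nra.
Qed.

Lemma last_indep {A} (l : list A) d1 d2 : l <> [] -> last l d1 = last l d2.
Proof.
  induction l as [|a l IH]; intros H; [congruence|].
  destruct l as [|b l]; [reflexivity|].
  change (last (b :: l) d1 = last (b :: l) d2). apply IH. discriminate.
Qed.

Lemma path_len_ge prev ps : path_len prev ps >= Defs.dist prev (last ps prev).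
Proof.
  revert prev. induction ps as [|p ps IH]; intros prev.
  - simpl. rewrite dist_self. lra.
  - cbn [path_len]. specialize (IH p).
    assert (last (p :: ps) prev = last ps p).
    { destruct ps as [|p1 ps]; [reflexivity|].
      change (last (p1 :: ps) prev = last (p1 :: ps) p). apply last_indep. discriminate. }
    rewrite H. pose proof (dist_tri prev p (last ps p)). lra.
Qed.

Lemma last_nth_gen {A} (l : list A) d : l <> [] -> last l d = nth (length l - 1) l d.
Proof.
  induction l as [|a l IH]; intros H; [congruence|].
  destruct l as [|b l]; [reflexivity|].
  change (last (a :: b :: l) d) with (last (b :: l) d).
  rewrite IH by discriminate. simpl. replace (length l - 0)%nat with (length l) by lia. reflexivity.
Qed.

Lemma covers_PI4 T x : covers (PI/4) T x <-> 0 <= snd T /\ fst T - snd T <= x /\ x <= fst T + snd T.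
Proof. unfold covers. rewrite tan_PI4. rewrite !Rmult_1_r. tauto. Qed.

Lemma path_len_repeat a m : path_len a (repeat a m) = 0.
Proof. induction m; simpl; [reflexivity|]. rewrite IHm, dist_self. ring. Qed.

Lemma is_OPT_gen xs lo hi v :
  xs <> [] -> lo <= 0 -> 0 <= hi ->
  (forall j, (j < length xs)%nat -> lo <= nth j xs 0 <= hi) ->
  (lo = 0 \/ exists j, (j < length xs)%nat /\ nth j xs 0 = lo) ->
  (hi = 0 \/ exists j, (j < length xs)%nat /\ nth j xs 0 = hi) ->
  0 <= v -> v * v = (lo^2 + hi^2)/2 ->
  is_OPT (PI/4) xs v.
Proof.
  intros Hne Hlo Hhi Hrange Hl Hh Hv Hv2. split.
  - intros ps [Hlen Hval].
    assert (Hn : (0 < length xs)%nat) by (destruct xs; [congruence|simpl; lia]).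
    set (n := length xs) in *.
    destruct (Hval (n - 1)%nat ltac:(lia)) as [H0 Hall].
    set (Pl := nth (n - 1) ps (0,0)) in *.
    assert (Hps : ps <> []) by (intro E; subst; simpl in Hlen; lia).
    pose proof (path_len_ge (0,0) ps) as Hpl.
    rewrite last_nth_gen in Hpl by exact Hps. rewrite Hlen in Hpl. fold n Pl in Hpl.
    unfold cost.
    apply covers_PI4 in H0.
    assert (Hu : fst Pl - snd Pl <= lo).
    { destruct Hl as [E|[j [Hj E]]]; [lra|].
      specialize (Hall j ltac:(lia)). apply covers_PI4 in Hall. rewrite E in Hall. lra. }
    assert (Hw : hi <= fst Pl + snd Pl).
    { destruct Hh as [E|[j [Hj E]]]; [lra|].
      specialize (Hall j ltac:(lia)). apply covers_PI4 in Hall. rewrite E in Hall. lra. }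
    assert (v <= Defs.dist (0,0) Pl).
    { unfold Defs.dist. simpl. rewrite <- (sqrt_square v) by exact Hv. apply sqrt_le_1_alt.
      rewrite Hv2. nra. }
    lra.
  - intros w Hw.
    set (apex := ((lo + hi)/2, (hi - lo)/2)).
    assert (Hn : (0 < length xs)%nat) by (destruct xs; [congruence|simpl; lia]).
    set (n := length xs) in *.
    assert (Hval : valid_solution (PI/4) xs (repeat apex n)).
    { split; [rewrite repeat_length; reflexivity|].
      intros i Hi. rewrite nth_repeat_lt by exact Hi. split.
      - apply covers_PI4. unfold apex; simpl. lra.
      - intros j Hj. apply covers_PI4. specialize (Hrange j ltac:(lia)). unfold apex; simpl. lra. }
    specialize (Hw _ Hval).
    unfold cost in Hw. destruct n as [|m]; [lia|]. simpl in Hw.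
    rewrite path_len_repeat in Hw.
    assert (Defs.dist (0,0) apex = v).
    { unfold Defs.dist, apex. simpl. rewrite <- (sqrt_square v) by exact Hv. f_equal. rewrite Hv2. field. }
    lra.
Qed.


Lemma nat_large (K : R) : exists n : nat, K < INR n.
Proof.
  destruct (archimed K) as [H1 _].
  exists (Z.to_nat (up K)).
  destruct (Z_le_gt_dec 0 (up K)) as [Hz|Hz].
  - rewrite INR_IZR_INZ, Z2Nat.id by exact Hz. lra.
  - pose proof (pos_INR (Z.to_nat (up K))). assert (IZR (up K) < 0) by (apply IZR_lt; lia). lra.
Qed.

Lemma final_contra (c D E r s0 : R) (Z Cc a : nat -> R) :
  1 < c -> 0 < D -> D * E = 1 + c^2 -> r * (1 + c^2) < c * (c + 1) ->
  (forall j, Z (S j) <= c * Z j + (1 - c^2) * a j + (c - 1) * D * Cc j) ->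
  (forall j, c^j <= a j) ->
  Cc O <= r * s0 ->
  (forall i, Cc (S i) <= r * (c^i * E)) ->
  Z O <= 0 ->
  (forall i, c^(S (S i)) - D * Cc (S i) <= Z (S i)) ->
  False.
Proof.
  intros Hc HD HDE Hr Hstep Ha HC0 HC HZ0 Hlow.
  set (Y2b := ((1 - c^2) + (c - 1) * D * r * s0) / c^2).
  set (delta := (c^2 - 1)/c^2 - (c - 1) * r * (D * E) / c^3).
  assert (Hc0 : 0 < c) by lra.
  assert (Hc2 : 0 < c^2) by (apply pow_lt; lra).
  assert (Hc3 : 0 < c^3) by (apply pow_lt; lra).
  assert (Hdelta : c^3 * delta = (c - 1) * (c * (c + 1) - r * (1 + c^2))).
  { unfold delta. rewrite HDE. field. lra. }
  assert (Hdpos : 0 < delta).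
  { assert (0 < (c - 1) * (c * (c + 1) - r * (1 + c^2))) by (apply Rmult_lt_0_compat; lra).
    nra. }
  assert (Hclaim : forall i, Z (S i) <= c^(S (S i)) * (Y2b - INR i * delta)).
  { induction i as [|i IH].
    - specialize (Hstep O). specialize (Ha O). simpl in Ha.
      assert (c * Z O <= c * 0) by (apply Rmult_le_compat_l; lra).
      assert ((1 - c^2) * a O <= (1 - c^2) * 1).
      { apply Rmult_le_compat_neg_l; [|exact Ha]. assert (1 < c^2) by nra. lra. }
      assert ((c - 1) * D * Cc O <= (c - 1) * D * (r * s0)).
      { apply Rmult_le_compat_l; [|exact HC0]. apply Rmult_le_pos; lra. }
      assert (E1 : c^(S (S 0)) * (Y2b - INR 0 * delta) = (1 - c^2) + (c - 1) * D * r * s0).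
      { unfold Y2b. simpl. field. lra. }
      rewrite E1. lra.
    - specialize (Hstep (S i)). specialize (Ha (S i)). specialize (HC i).
      set (t := c^i) in *.
      assert (Ht : 0 < t) by (apply pow_lt; lra).
      change (c^(S i)) with (c * t) in Ha.
      change (c^(S (S i))) with (c * (c * t)) in IH.
      change (c^(S (S (S i)))) with (c * (c * (c * t))).
      rewrite S_INR.
      assert (H1 : c * Z (S i) <= c * (c * (c * t) * (Y2b - INR i * delta))).
      { apply Rmult_le_compat_l; lra. }
      assert (H2 : (1 - c^2) * a (S i) <= (1 - c^2) * (c * t)).
      { apply Rmult_le_compat_neg_l; [|exact Ha]. nra. }
      assert (H3 : (c - 1) * D * Cc (S i) <= (c - 1) * D * (r * (t * E))).
      { apply Rmult_le_compat_l; [|exact HC]. apply Rmult_le_pos; lra. }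
      assert (E2 : (1 - c^2) * (c * t) + (c - 1) * D * (r * (t * E)) = - (t * (c^3 * delta))).
      { rewrite Hdelta. replace ((c - 1) * D * (r * (t * E))) with ((c-1) * r * t * (D * E)) by ring.
        rewrite HDE. ring. }
      assert (E3 : c * (c * (c * t) * (Y2b - INR i * delta)) - t * (c^3 * delta)
                   = c * (c * (c * t)) * (Y2b - (INR i + 1) * delta)) by ring.
      lra. }
  destruct (nat_large ((c^2 * Y2b - c^2 + r * (D * E)) / (c^2 * delta))) as [n Hn].
  specialize (Hclaim n). specialize (Hlow n). specialize (HC n).
  set (t := c^n) in *.
  assert (Ht : 0 < t) by (apply pow_lt; lra).
  change (c^(S (S n))) with (c * (c * t)) in Hclaim, Hlow.
  assert (H3 : D * Cc (S n) <= D * (r * (t * E))) by (apply Rmult_le_compat_l; lra).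
  assert (H4 : c * (c * t) - r * (D * E) * t <= c * (c * t) * (Y2b - INR n * delta)).
  { replace (r * (D * E) * t) with (D * (r * (t * E))) by ring. lra. }
  assert (H5 : c^2 - r * (D * E) <= c^2 * (Y2b - INR n * delta)).
  { apply (Rmult_le_reg_l t); [exact Ht|].
    replace (t * (c^2 - r * (D * E))) with (c * (c * t) - r * (D * E) * t) by ring.
    replace (t * (c ^ 2 * (Y2b - INR n * delta))) with (c * (c * t) * (Y2b - INR n * delta)) by ring.
    exact H4. }
  assert (H6 : INR n * (c^2 * delta) > c^2 * Y2b - c^2 + r * (D * E)).
  { assert (0 < c^2 * delta) by (apply Rmult_lt_0_compat; lra).
    apply (Rmult_lt_compat_r (c^2 * delta)) in Hn; [|exact H].
    unfold Rdiv in Hn. rewrite Rmult_assoc, Rinv_l in Hn by lra. lra. }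
  nra.
Qed.


Definition Pt (A : online_alg) (c : R) (k : nat) : R * R :=
  match k with O => (0,0) | S _ => A (xsN c k) end.

Lemma alg_run_xsN A c n : alg_run A (xsN c n) = map (fun i => Pt A c (S i)) (seq 0 n).
Proof.
  unfold alg_run. rewrite length_xsN. apply map_ext_in. intros i Hi.
  apply in_seq in Hi. rewrite firstn_xsN by lia. reflexivity.
Qed.

Lemma pathP A c : forall n s,
  path_len (Pt A c s) (map (fun i => Pt A c (S i)) (seq s (S n))) =
  path_len (Pt A c s) (map (fun i => Pt A c (S i)) (seq s n)) + Defs.dist (Pt A c (s + n)) (Pt A c (S (s + n))).
Proof.
  induction n as [|n IH]; intros s.
  - cbn [seq map path_len]. rewrite Nat.add_0_r. ring.
  - change (seq s (S (S n))) with (s :: seq (S s) (S n)).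
    change (seq s (S n)) with (s :: seq (S s) n).
    cbn [map path_len].
    rewrite (IH (S s)).
    replace (S s + n)%nat with (s + S n)%nat by lia. ring.
Qed.

Definition Cc (A : online_alg) (c : R) (j : nat) : R := cost (alg_run A (xsN c (S j))).

Lemma Cc_S A c j : Cc A c (S j) = Cc A c j + Defs.dist (Pt A c (S j)) (Pt A c (S (S j))).
Proof.
  unfold Cc, cost. rewrite !alg_run_xsN.
  change (0,0) with (Pt A c 0).
  rewrite (pathP A c (S j) 0). reflexivity.
Qed.

Lemma Cc_0 A c : Cc A c 0 = Defs.dist (0,0) (Pt A c 1).
Proof. unfold Cc, cost. rewrite alg_run_xsN. simpl. ring. Qed.

Lemma cov A c j : online_valid (PI/4) A ->
  covers (PI/4) (Pt A c (S j)) 0 /\ covers (PI/4) (Pt A c (S j)) ((-c)^j).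
Proof.
  intros HA.
  destruct (HA (xsN c (S j))) as [Hlen Hval].
  { intro E. pose proof (length_xsN c (S j)). rewrite E in H. simpl in H. lia. }
  rewrite length_xsN in Hval.
  destruct (Hval j ltac:(lia)) as [H0 Hall].
  rewrite alg_run_xsN in H0, Hall.
  rewrite (nth_indep _ (0,0) (Pt A c (S 0))) in H0, Hall by (rewrite length_map, length_seq; lia).
  rewrite (map_nth (fun i => Pt A c (S i))) in H0, Hall.
  rewrite seq_nth in H0, Hall by lia. simpl Nat.add in H0, Hall.
  split; [exact H0|].
  specialize (Hall j (le_n j)). rewrite nth_xsN in Hall by lia. exact Hall.
Qed.

Definition sg (j : nat) : R := (-1)^j.

Lemma sg_cases j : sg j = 1 \/ sg j = -1.
Proof. induction j as [|j IH]; unfold sg in *; simpl; [left; reflexivity|].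
  destruct IH as [E|E]; rewrite E; [right|left]; ring. Qed.

Lemma sg_S j : sg (S j) = - sg j.
Proof. unfold sg. simpl. ring. Qed.

Lemma sg_sq j : sg j * sg j = 1.
Proof. destruct (sg_cases j) as [E|E]; rewrite E; ring. Qed.

Lemma pow_neg c j : (-c)^j = sg j * c^j.
Proof. unfold sg. rewrite <- Rpow_mult_distr. f_equal. ring. Qed.

Definition aF (j : nat) (P : R * R) : R := snd P + sg j * fst P.
Definition bF (j : nat) (P : R * R) : R := snd P - sg j * fst P.

Lemma ab_bounds c j P : 0 <= c -> covers (PI/4) P 0 -> covers (PI/4) P ((-c)^j) ->
  c^j <= aF j P /\ 0 <= bF j P.
Proof.
  intros Hc H0 H1. apply covers_PI4 in H0. apply covers_PI4 in H1.
  rewrite pow_neg in H1. unfold aF, bF.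
  destruct (sg_cases j) as [E|E]; rewrite E in *; lra.
Qed.

Lemma cs_step c j P P' :
  c * (aF j P' - aF j P) + (bF j P' - bF j P) <= sqrt ((c-1)^2 + (c+1)^2) * Defs.dist P P'.
Proof.
  pose proof (CS (-(c-1) * sg j) (-(c+1)) (fst P) (fst P') (snd P) (snd P')) as H.
  replace ((-(c-1) * sg j)^2 + (-(c+1))^2) with ((c-1)^2 + (c+1)^2) in H
    by (replace ((-(c-1) * sg j)^2) with ((c-1)^2 * (sg j * sg j)) by ring; rewrite sg_sq; ring).
  unfold Defs.dist. unfold aF, bF.
  replace (c * (snd P' + sg j * fst P' - (snd P + sg j * fst P)) +
   (snd P' - sg j * fst P' - (snd P - sg j * fst P)))
   with (-(c-1) * sg j * (fst P - fst P') + -(c+1) * (snd P - snd P')) by ring.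
  exact H.
Qed.

Lemma opt1 c : is_OPT (PI/4) (xsN c 1) (sqrt (1/2)).
Proof.
  apply (is_OPT_gen _ 0 1).
  - discriminate.
  - lra.
  - lra.
  - intros j Hj. rewrite length_xsN in Hj. assert (j = 0%nat) by lia. subst.
    rewrite nth_xsN by lia. simpl. lra.
  - left; reflexivity.
  - right. exists 0%nat. rewrite length_xsN. split; [lia|]. rewrite nth_xsN by lia. reflexivity.
  - apply sqrt_pos.
  - rewrite sqrt_sqrt by lra. field.
Qed.

Lemma range_lemma c : 1 < c -> forall i k, (k <= S i)%nat ->
  Rmin ((-c)^(S i)) ((-c)^i) <= (-c)^k <= Rmax ((-c)^(S i)) ((-c)^i).
Proof.
  intros Hc. induction i as [|i IH]; intros k Hk.
  - destruct k as [|[|k]]; [| |lia].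
    + split; [apply Rmin_r|apply Rmax_r].
    + split; [apply Rmin_l|apply Rmax_l].
  - destruct (Nat.eq_dec k (S (S i))) as [E|E].
    + subst. split; [apply Rmin_l|apply Rmax_l].
    + specialize (IH k ltac:(lia)).
      set (b := (-c)^i) in *.
      assert (Ea : (-c)^(S i) = - c * b) by (unfold b; simpl; ring).
      assert (Ea' : (-c)^(S (S i)) = c * c * b) by (unfold b; simpl; ring).
      rewrite Ea in IH. rewrite Ea', Ea.
      assert (Hmin : Rmin (c * c * b) (- c * b) <= Rmin (- c * b) b).
      { apply Rmin_glb; [apply Rmin_r|].
        destruct (Rle_dec 0 b).
        - pose proof (Rmin_r (c * c * b) (- c * b)).
          assert (0 <= c * b) by (apply Rmult_le_pos; lra). lra.
        - pose proof (Rmin_l (c * c * b) (- c * b)).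
          assert (0 < c * c - 1) by nra.
          assert (0 <= (c * c - 1) * (- b)) by (apply Rmult_le_pos; lra).
          lra. }
      assert (Hmax : Rmax (- c * b) b <= Rmax (c * c * b) (- c * b)).
      { apply Rmax_lub; [apply Rmax_r|].
        destruct (Rle_dec 0 b).
        - pose proof (Rmax_l (c * c * b) (- c * b)).
          assert (0 < c * c - 1) by nra.
          assert (0 <= (c * c - 1) * b) by (apply Rmult_le_pos; lra).
          lra.
        - pose proof (Rmax_r (c * c * b) (- c * b)).
          assert (0 <= c * (- b)) by (apply Rmult_le_pos; lra). lra. }
      lra.
Qed.

Lemma optS c i : 1 < c ->
  is_OPT (PI/4) (xsN c (S (S i))) (c^i * sqrt ((c^2 + 1)/2)).
Proof.
  intros Hc.
  set (a := (-c)^(S i)). set (b := (-c)^i).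
  assert (Ea : a = - c * b) by (unfold a, b; simpl; ring).
  assert (Hb2 : b * b = c^i * c^i).
  { unfold b. rewrite pow_neg. replace (sg i * c ^ i * (sg i * c ^ i)) with ((sg i * sg i) * (c^i * c^i)) by ring.
    rewrite sg_sq. ring. }
  apply (is_OPT_gen _ (Rmin a b) (Rmax a b)).
  - discriminate.
  - destruct (Rle_dec 0 b).
    + pose proof (Rmin_l a b). nra.
    + pose proof (Rmin_r a b). lra.
  - destruct (Rle_dec 0 b).
    + pose proof (Rmax_r a b). lra.
    + pose proof (Rmax_l a b). nra.
  - intros j Hj. rewrite length_xsN in Hj. rewrite nth_xsN by lia.
    apply (range_lemma c Hc i j). lia.
  - right. apply Rmin_case.
    + exists (S i). rewrite length_xsN, nth_xsN by lia. split; [lia|reflexivity].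
    + exists i. rewrite length_xsN, nth_xsN by lia. split; [lia|reflexivity].
  - right. apply Rmax_case.
    + exists (S i). rewrite length_xsN, nth_xsN by lia. split; [lia|reflexivity].
    + exists i. rewrite length_xsN, nth_xsN by lia. split; [lia|reflexivity].
  - apply Rmult_le_pos; [apply pow_le; lra|apply sqrt_pos].
  - assert (Hs : (Rmin a b)^2 + (Rmax a b)^2 = a^2 + b^2).
    { unfold Rmin, Rmax. destruct (Rle_dec a b); ring. }
    rewrite Hs.
    replace (c ^ i * sqrt ((c ^ 2 + 1) / 2) * (c ^ i * sqrt ((c ^ 2 + 1) / 2)))
      with ((c^i * c^i) * (sqrt ((c ^ 2 + 1) / 2) * sqrt ((c ^ 2 + 1) / 2))) by ring.
    rewrite sqrt_sqrt by (assert (0 <= c^2) by nra; lra).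
    rewrite Ea. rewrite <- Hb2. field.
Qed.

Theorem corollary1 :
  forall A : online_alg, online_valid (PI / 4) A ->
  forall r : R, r < (1 + sqrt 2) / 2 ->
  exists (xs : list R) (v : R),
    xs <> nil /\ is_OPT (PI / 4) xs v /\ cost (alg_run A xs) > r * v.
Proof.
  intros A HA r Hr.
  apply NNPP. intro Hneg.
  set (c := 1 + sqrt 2).
  assert (Hs2 : sqrt 2 * sqrt 2 = 2) by (apply sqrt_sqrt; lra).
  assert (Hs1 : 1 < sqrt 2).
  { rewrite <- sqrt_1. apply sqrt_lt_1_alt. lra. }
  assert (Hc : 1 < c) by (unfold c; lra).
  set (D := sqrt ((c-1)^2 + (c+1)^2)).
  set (E := sqrt ((c^2 + 1)/2)).
  assert (HC0 : Cc A c 0 <= r * sqrt (1/2)).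
  { destruct (Rle_dec (Cc A c 0) (r * sqrt (1/2))) as [H|H]; [exact H|].
    exfalso. apply Hneg. exists (xsN c 1), (sqrt (1/2)).
    split; [discriminate|]. split; [apply opt1|]. unfold Cc in H. lra. }
  assert (HC : forall i, Cc A c (S i) <= r * (c^i * E)).
  { intros i.
    destruct (Rle_dec (Cc A c (S i)) (r * (c^i * E))) as [H|H]; [exact H|].
    exfalso. apply Hneg. exists (xsN c (S (S i))), (c^i * E).
    split; [discriminate|]. split; [apply optS; exact Hc|]. unfold Cc in H. lra. }
  set (a := fun j => aF j (Pt A c (S j))).
  set (Z := fun j => c * aF j (Pt A c (S j)) + bF j (Pt A c (S j)) - D * Cc A c j).
  assert (Hab : forall j, c^j <= aF j (Pt A c (S j)) /\ 0 <= bF j (Pt A c (S j))).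
  { intros j. destruct (cov A c j HA) as [H0 H1]. apply ab_bounds; [lra|exact H0|exact H1]. }
  apply (final_contra c D E r (sqrt (1/2)) Z (Cc A c) a).
  - exact Hc.
  - unfold D. apply sqrt_lt_R0. nra.
  - unfold D, E. rewrite <- sqrt_mult by nra.
    replace (((c - 1) ^ 2 + (c + 1) ^ 2) * ((c ^ 2 + 1) / 2)) with ((1 + c^2) * (1 + c^2)) by field.
    apply sqrt_square. nra.
  - unfold c. 
    replace ((1 + sqrt 2)^2) with (3 + 2 * sqrt 2) by (simpl; nra).
    assert (r * (4 + 2 * sqrt 2) < (1 + sqrt 2) / 2 * (4 + 2 * sqrt 2)).
    { apply Rmult_lt_compat_r; lra. }
    nra.
  - intros j. unfold Z, a. rewrite Cc_S.
    pose proof (cs_step c (S j) (Pt A c (S j)) (Pt A c (S (S j)))) as H.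
    fold D in H.
    unfold aF, bF in *. rewrite sg_S in *. lra.
  - intros j. unfold a. apply Hab.
  - exact HC0.
  - exact HC.
  - unfold Z. cbv beta. rewrite Cc_0.
    pose proof (cs_step c 0 (0,0) (Pt A c 1)) as H. fold D in H.
    unfold aF, bF in *. change (Pt A c 1) with (A (xsN c 1)) in *. cbn [fst snd] in H. lra.
  - intros i. unfold Z. cbv beta.
    destruct (Hab (S i)) as [H1 H2].
    assert (c * c^(S i) <= c * aF (S i) (Pt A c (S (S i)))) by (apply Rmult_le_compat_l; lra).
    change (c^(S (S i))) with (c * c^(S i)). lra.
Qed.
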